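(* Let $p$ be a prime and $d$ a positive integer. For every dimension $k\geq d+1$ and every $S\subseteq\mathbb{F}_p^k$ with $|S|\geq\binom{d+k+1}{k}+1$, there exists a function $h:\mathbb{F}_p^k\to\mathbb{F}_p$ such that $\deg(h)=k(p-1)-(d+1)$ and $\supp(h)\subseteq S$.
   Context: Functions $\mathbb{F}_p^k\to\mathbb{F}_p$ are identified with their unique polynomial representations with individual degrees in $\{0,\dots,p-1\}$; the degree is the maximal total degree of a monomial with nonzero coefficient. $\supp(h)=\{\alpha\in\mathbb{F}_p^k: h(\alpha)\neq0\}$. *)

(* Defs.v *)
From mathcomp Require Import all_boot all_algebra.
From mathcomp.multinomials Require Import mpoly.
Set Implicit Arguments. Unset Strict Implicit. Unset Printing Implicit Defensive.
Import GRing.Theory.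
Local Open Scope ring_scope.

Notation pt p k := {ffun 'I_k -> 'F_p}.

Definition reduced (p k : nat) (P : {mpoly 'F_p[k]}) : Prop :=
  forall m, m \in msupp P -> forall i : 'I_k, (m i < p)%N.

Definition represents (p k : nat) (P : {mpoly 'F_p[k]}) (h : pt p k -> 'F_p) : Prop :=
  reduced P /\ forall a : pt p k, P.@[a] = h a.

(* deg(h) = D : the reduced representation of h is a nonzero polynomial of
   total degree D  (msize P = 1 + total degree, msize 0 = 0). *)
Definition has_deg (p k : nat) (h : pt p k -> 'F_p) (D : nat) : Prop :=
  exists P : {mpoly 'F_p[k]}, represents P h /\ msize P = D.+1.

Definition supp (p k : nat) (h : pt p k -> 'F_p) : {set pt p k} :=
  [set a | h a != 0].

(* Main.v *)
Require Import Defs.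
From mathcomp Require Import all_boot all_algebra finfield zify.
From mathcomp.multinomials Require Import mpoly.
Set Implicit Arguments. Unset Strict Implicit. Unset Printing Implicit Defensive.
Import GRing.Theory.
Local Open Scope ring_scope.

Section Main.
Variables p k : nat.
Hypothesis Hp : prime p.
Local Notation F := 'F_p.

Lemma p_gt1 : (1 < p)%N. Proof. exact: prime_gt1. Qed.
Lemma cardF : #|F| = p. Proof. exact: card_Fp. Qed.

Lemma fermat (t : F) : t != 0 -> t ^+ p.-1 = 1.
Proof.
move=> nz; have : t ^+ p.-1.+1 = t.
  by rewrite (prednK (prime_gt0 Hp)); have := expf_card t; rewrite cardF.
by rewrite exprS => h; apply: (mulfI nz); rewrite h mulr1.
Qed.

Lemma powsum0 j : (j < p.-1)%N -> \sum_(t : F) t ^+ j = 0.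
Proof.
case: j => [|j] hj.
  rewrite (eq_bigr (fun _ => 1)) ?sumr_const ?cardT -?cardE ?cardF; last by move=> *; rewrite expr0.
  by rewrite pchar_Fp_0.
have [a /andP [nza na1]] : exists a : F, (a != 0) && (a ^+ j.+1 != 1).
  case: (boolP [exists a : F, (a != 0) && (a ^+ j.+1 != 1)]) => [/existsP //|/existsPn H]; exfalso.
  pose q : {poly F} := 'X^(j.+2) - 'X.
  have szq : size q = j.+3.
    by rewrite /q size_polyDl ?size_polyXn // size_polyN size_polyX ltnS.
  have nzq : q != 0 by rewrite -size_poly_eq0 szq.
  have := max_poly_roots nzq _ (enum_uniq F).
  rewrite -cardE cardF szq.
  have -> : all (root q) (enum F).
    apply/allP => t _; rewrite /root /q !hornerE.
    have [->|nzt] := eqVneq t 0; first by rewrite expr0n subrr.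
    have := H t; rewrite nzt /= negbK => /eqP h.
    by rewrite exprS h mulr1 subrr.
  move=> /(_ isT) h2; move: hj; rewrite -ltnS (ltn_predK p_gt1) => h1.
  by move: h2; rewrite ltnS leqNgt h1.
set s := \sum_t _.
have : s = a ^+ j.+1 * s.
  rewrite /s mulr_sumr [LHS](reindex_inj (mulfI nza)) /=.
  by apply: eq_bigr => t _; rewrite exprMn.
move/eqP; rewrite -subr_eq0 -{1}[s]mul1r -mulrBl mulf_eq0 subr_eq0 eq_sym (negbTE na1) /=.
by move/eqP.
Qed.

Local Notation X := {ffun 'I_k -> F}.
Local Notation M := {ffun 'I_k -> 'I_p}.

Definition deg (n : M) : nat := (\sum_i (n i : nat))%N.
Definition mono (n : M) (x : X) : F := \prod_i x i ^+ n i.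
Definition Rv (n : M) : 'rV[F]_#|X| := \row_j mono n (enum_val j).
Definition Bm (e : nat) : 'M[F]_(#|M|, #|X|) :=
  \matrix_(i, j) if (deg (enum_val i) < e)%N then mono (enum_val i) (enum_val j) else 0.
Definition K := (k * p.-1)%N.

Lemma rowBm e i : row i (Bm e) = if (deg (enum_val i) < e)%N then Rv (enum_val i) else 0.
Proof. by apply/rowP => j; rewrite !mxE; case: ifP => _; rewrite ?mxE. Qed.

Lemma Rv_sub n e : (deg n < e)%N -> (Rv n <= Bm e)%MS.
Proof. by move=> h; have := row_sub (enum_rank n) (Bm e); rewrite rowBm enum_rankK h. Qed.

Lemma deg_le n : (deg n <= K)%N.
Proof.
rewrite /deg /K; apply: (@leq_trans (\sum_(i < k) p.-1)%N); last by rewrite sum_nat_const card_ord.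
apply: leq_sum => i _.
by rewrite -ltnS (ltn_predK p_gt1).
Qed.

Lemma sumX (G : X -> F) : \sum_(j < #|X|) G (enum_val j) = \sum_x G x.
Proof. by rewrite (big_enum_val G). Qed.

Lemma ortho a b : (a + b <= K.+1)%N -> Bm a *m (Bm b)^T = 0.
Proof.
move=> hab; apply/matrixP => i i'; rewrite !mxE.
under eq_bigr do rewrite !mxE.
set n := enum_val i; set m := enum_val i'.
case: (ltnP (deg n) a) => ha; last by rewrite big1 // => j _; rewrite mul0r.
case: (ltnP (deg m) b) => hb; last by rewrite big1 // => j _; rewrite mulr0.
rewrite (sumX (fun x => mono n x * mono m x)).
have -> : \sum_x mono n x * mono m x = \sum_(x : X) \prod_i x i ^+ (n i + m i).
  apply: eq_bigr => x _; rewrite /mono -big_split /=.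
  by apply: eq_bigr => l _; rewrite exprD.
rewrite -(bigA_distr_bigA (fun i t => t ^+ (n i + m i))) /=.
have [i0 hi0] : exists i0, (n i0 + m i0 < p.-1)%N.
  case: (boolP [exists i0, (n i0 + m i0 < p.-1)%N]) => [/existsP //|/existsPn H]; exfalso.
  have : (K <= deg n + deg m)%N.
    rewrite /deg /K -big_split /=; apply: (@leq_trans (\sum_(i < k) p.-1)%N); first by rewrite sum_nat_const card_ord.
    apply: leq_sum => l _.
    by have := H l; rewrite -leqNgt.
  rewrite leqNgt => /negP; apply.
  by rewrite -ltnS; apply: leq_trans hab; rewrite -addSn -addnS leq_add.
by rewrite (bigD1 i0) //= powsum0 // mul0r.
Qed.

Lemma pm1_neq0 : (p.-1 != 0)%N.
Proof. by rewrite -lt0n -ltnS (ltn_predK p_gt1) p_gt1. Qed.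

Lemma indic_sub (a : X) : (\row_(j < #|X|) ((enum_val j == a)%B%:R : F) <= Bm K.+1)%MS.
Proof.
pose q (i : 'I_k) : {poly F} := 1 - ('X - (a i)%:P) ^+ p.-1.
have szq i : (size (q i) <= p)%N.
  apply: leq_trans (size_polyD _ _) _; rewrite size_polyN size_exp_XsubC size_poly1.
  by rewrite geq_max (prednK (prime_gt0 Hp)) leqnn (prime_gt0 Hp).
have qE i t : (q i).[t] = ((t == a i)%:R : F).
  rewrite /q !hornerE; have [->|ne] := eqVneq t (a i).
    by rewrite subrr expr0n (negbTE pm1_neq0) subr0.
  by rewrite fermat ?subrr // subr_eq0.
pose c (n : M) := \prod_i (q i)`_(n i).
have -> : \row_(j < #|X|) ((enum_val j == a)%B%:R : F) = \sum_(n : M) c n *: Rv n.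
  apply/rowP => j; rewrite summxE mxE; set y := enum_val j.
  under eq_bigr do rewrite !mxE.
  have -> : \sum_(n : M) c n * mono n y = \prod_i \sum_(l : 'I_p) (q i)`_l * y i ^+ l.
    rewrite bigA_distr_bigA /=; apply: eq_bigr => n _.
    by rewrite /c /mono -big_split.
  under eq_bigr do rewrite -horner_coef_wide // qE.
  have [->|ne] := eqVneq y a; first by rewrite big1 // => i _; rewrite eqxx.
  have [i0 hi0] : exists i0, y i0 != a i0.
    case: (boolP [exists i0, y i0 != a i0]) => [/existsP //|/existsPn H]; exfalso.
    by move/negP: ne; apply; apply/eqP/ffunP => i; have := H i; rewrite negbK => /eqP.
  by rewrite (bigD1 i0) //= (negbTE hi0) mul0r.
apply: summx_sub => n _; apply: scalemx_sub; apply: Rv_sub.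
by rewrite ltnS deg_le.
Qed.

Lemma full_sub : ((1%:M : 'M[F]_#|X|) <= Bm K.+1)%MS.
Proof.
apply/row_subP => j; have := indic_sub (enum_val j).
congr (_ <= _)%MS; apply/rowP => l; rewrite !mxE.
by rewrite (inj_eq enum_val_inj) eq_sym.
Qed.

Lemma rank_full : \rank (Bm K.+1) = #|X|.
Proof.
apply/eqP; rewrite eqn_leq rank_leq_col /=.
by have := mxrankS full_sub; rewrite mxrank1.
Qed.

Lemma rank_rows m n (A : 'M[F]_(m, n)) (I : {set 'I_m}) :
  (forall i, i \notin I -> row i A = 0) -> (\rank A <= #|I|)%N.
Proof.
move=> H; pose A' := \matrix_(l < #|I|) row (enum_val l) A.
apply: leq_trans (rank_leq_row A'); apply: mxrankS; apply/row_subP => i.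
case: (boolP (i \in I)) => hi; last by rewrite H // sub0mx.
by have := row_sub (enum_rank_in hi i) A'; rewrite rowK enum_rankK_in.
Qed.

Lemma cardMX : #|M| = #|X|.
Proof. by rewrite !card_ffun cardF !card_ord. Qed.

Definition Ie e : {set 'I_#|M|} := [set i | (deg (enum_val i) < e)%N].

Lemma rank_Bm e : \rank (Bm e) = #|Ie e|.
Proof.
pose C : 'M[F]_(#|M|, #|X|) := \matrix_(i, j) if ~~ (deg (enum_val i) < e)%N
   then mono (enum_val i) (enum_val j) else 0.
have eqB : Bm K.+1 = Bm e + C.
  apply/matrixP => i j; rewrite !mxE ltnS deg_le.
  by case: ifP => _ /=; rewrite ?addr0 ?add0r.
have h1 : (\rank (Bm e) <= #|Ie e|)%N.
  apply: rank_rows => i; rewrite inE rowBm => /negbTE ->; done.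
have h2 : (\rank C <= #|~: Ie e|)%N.
  apply: rank_rows => i; rewrite !inE negbK => hi.
  by apply/rowP => j; rewrite !mxE hi.
have h3 : (#|X| <= \rank (Bm e) + \rank C)%N.
  apply: (leq_trans (eq_leq (esym rank_full))); rewrite eqB; apply: leq_trans (mxrank_adds_leqif _ _).
  by apply: mxrankS; apply: addmx_sub_adds; apply: submx_refl.
have h4 : (#|Ie e| + #|~: Ie e| = #|X|)%N by rewrite cardsC card_ord; exact: cardMX.
lia.
Qed.

Lemma cardP (P : pred M) : #|[set i : 'I_#|M| | P (enum_val i)]| = #|[set n : M | P n]|.
Proof.
rewrite -(card_imset _ enum_val_inj); apply: eq_card => n; rewrite inE.
apply/imsetP/idP => [[i] |h]; first by rewrite inE => h ->.
by exists (enum_rank n); rewrite ?inE enum_rankK.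
Qed.

Lemma cardIe a : #|Ie a| = #|[set n : M | (deg n < a)%N]|.
Proof. exact: (cardP (fun n => deg n < a)%N). Qed.

Definition comp (n : M) : M := [ffun i => rev_ord (n i)].

Lemma compK : involutive comp.
Proof. by move=> n; apply/ffunP => i; rewrite !ffunE rev_ordK. Qed.

Lemma deg_comp n : deg (comp n) = (K - deg n)%N.
Proof.
have : (deg (comp n) + deg n = K)%N.
  rewrite /deg -big_split /= /K -[in RHS](card_ord k) -sum_nat_const.
  apply: eq_bigr => i _; rewrite ffunE /=.
  have := ltn_ord (n i); lia.
lia.
Qed.

Lemma card_compl e : (e <= K)%N -> (#|Ie (K - e).+1| + #|Ie e| = #|X|)%N.
Proof.
move=> eK.
have -> : #|Ie (K - e).+1| = #|~: Ie e|.
  have -> : ~: Ie e = [set i | ~~ (deg (enum_val i) < e)%N].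
    by apply/setP => i; rewrite !inE.
  rewrite cardIe (cardP (fun n => ~~ (deg n < e)%N)) -(card_imset _ (can_inj compK)).
  apply: eq_card => n; rewrite inE; apply/imsetP/idP => [[m] h ->|h].
    by rewrite deg_comp; have := deg_le m; move: h; rewrite inE; lia.
  exists (comp n); last by rewrite compK.
  by rewrite inE deg_comp; have := deg_le n; move: h; lia.
by rewrite addnC cardsC card_ord cardMX.
Qed.

Lemma ker_sub e : (e <= K)%N -> (kermx (Bm e)^T <= Bm (K - e).+1)%MS.
Proof.
move=> eK.
have s : (Bm (K - e).+1 <= kermx (Bm e)^T)%MS.
  by rewrite sub_kermx ortho // addSn ltnS subnK.
rewrite -(mxrank_leqif_sup s).2 mxrank_ker mxrank_tr !rank_Bm.
by rewrite -(card_compl eK) addnK.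
Qed.

Definition Xi (i : 'I_k) : 'M[F]_#|X| := diag_mx (\row_j (enum_val j : X) i).
Definition PS (S : {set X}) : 'M[F]_#|X| := diag_mx (\row_j ((enum_val j \in S)%B%:R)).

Definition nxt (n : M) (i : 'I_k) : M :=
  [ffun l => if l == i then insubd (insubd (n i) 1%N) (n i).+1 else n l].

Lemma nxt_val n i : val (nxt n i i) = if ((n i).+1 < p)%N then (n i).+1 else 1%N.
Proof.
rewrite ffunE eqxx val_insubd; case: ifP => //.
by rewrite val_insubd p_gt1.
Qed.

Lemma expp (t : F) : t ^+ p = t.
Proof. by have := expf_card t; rewrite cardF. Qed.

Lemma Rv_Xi n i : Rv n *m Xi i = Rv (nxt n i).
Proof.
apply/rowP => j; rewrite mul_mx_diag !mxE /mono; set y := enum_val j.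
rewrite (bigD1 i) //= [in RHS](bigD1 i) //= mulrAC; congr (_ * _).
  rewrite nxt_val; case: ifP => [_|/negbT]; first by rewrite exprSr.
  rewrite -leqNgt => h.
  have e : (n i).+1 = p by have := ltn_ord (n i); lia.
  rewrite -exprSr e.
  by rewrite expp expr1.
by apply: eq_bigr => l hl; rewrite ffunE (negbTE hl).
Qed.

Lemma deg_nxt (n : M) i : (deg (nxt n i) <= (deg n).+1)%N.
Proof.
rewrite /deg (bigD1 i) //= [X in (_ <= X.+1)%N](bigD1 i) //= -addSn leq_add //.
  by rewrite nxt_val; case: ifP.
by rewrite leq_eqVlt; apply/orP; left; apply/eqP; apply: eq_bigr => l hl; rewrite ffunE (negbTE hl).
Qed.

Lemma pred_ex (n : M) i : (0 < n i)%N -> exists n', nxt n' i = n /\ (deg n' < deg n)%N.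
Proof.
move=> hi; pose n' : M := [ffun l => if l == i then insubd (n i) (n i).-1 else n l].
have v' : val (n' i) = (n i).-1.
  by rewrite ffunE eqxx val_insubd (leq_ltn_trans (leq_pred _) (ltn_ord _)).
exists n'; split.
  apply/ffunP => l; apply: val_inj; case: (eqVneq l i) => [->|hl].
    by rewrite nxt_val v' (prednK hi) ltn_ord.
  by rewrite !ffunE (negbTE hl).
rewrite /deg (bigD1 i) //= [X in (_ < X)%N](bigD1 i) //= v'.
rewrite -addSn leq_add ?(prednK hi) //.
by rewrite leq_eqVlt; apply/orP; left; apply/eqP; apply: eq_bigr => l hl; rewrite ffunE (negbTE hl).
Qed.

Lemma Bm_Xi e i : (Bm e *m Xi i <= Bm e.+1)%MS.
Proof.
apply/row_subP => l; rewrite row_mul rowBm; case: ifP => h; last by rewrite mul0mx sub0mx.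
by rewrite Rv_Xi; apply: Rv_sub; apply: leq_ltn_trans (deg_nxt _ _) _.
Qed.

Lemma closure (S : {set X}) d :
  (Bm d.+2 *m PS S <= Bm d.+1 *m PS S)%MS ->
  forall n, (Rv n *m PS S <= Bm d.+1 *m PS S)%MS.
Proof.
move=> H n; move: {-1}(deg n) (leqnn (deg n)) => t; elim: t n => [|t IH] n hn.
  by apply: submxMr; apply: Rv_sub; apply: leq_ltn_trans hn _.
case: (ltnP (deg n) d.+1) => hd; first by apply: submxMr; apply: Rv_sub.
have [i hi] : exists i, (0 < n i)%N.
  case: (boolP [exists i, (0 < n i)%N]) => [/existsP //|/existsPn H0]; exfalso.
  have : deg n = 0%N by rewrite /deg big1 // => i _; have := H0 i; rewrite lt0n negbK => /eqP.
  by move=> e; rewrite e in hd.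
have [n' [e hn']] := pred_ex hi.
have IH' := IH n' (leq_trans hn' hn).
rewrite -e -Rv_Xi -mulmxA /Xi /PS diag_mxC mulmxA -/(Xi i) -/(PS S).
apply: submx_trans (submxMr _ IH') _.
rewrite -mulmxA /Xi /PS diag_mxC mulmxA -/(Xi i) -/(PS S).
apply: submx_trans H; apply: submxMr; exact: Bm_Xi.
Qed.

Lemma cardPX (P : pred X) : #|[set j : 'I_#|X| | P (enum_val j)]| = #|[set x : X | P x]|.
Proof.
rewrite -(card_imset _ enum_val_inj); apply: eq_card => x; rewrite inE.
apply/imsetP/idP => [[i] |h]; first by rewrite inE => h ->.
by exists (enum_rank x); rewrite ?inE enum_rankK.
Qed.

Lemma rank_PS (S : {set X}) : (#|S| <= \rank (PS S))%N.
Proof.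
pose I : {set 'I_#|X|} := [set j | enum_val j \in S].
pose Q : 'M[F]_#|X| := diag_mx (\row_j ((enum_val j \notin S)%B%:R)).
have e1 : 1%:M = PS S + Q.
  apply/matrixP => i j; rewrite !mxE; case: eqP => [->|]; last by rewrite !mulr0n addr0.
  by rewrite !mulr1n; case: (enum_val j \in S); rewrite /= ?addr0 ?add0r.
have h1 : (\rank Q <= #|~: I|)%N.
  apply: rank_rows => i; rewrite !inE negbK => hi.
  by apply/rowP => j; rewrite !mxE hi /= mul0rn.
have h2 : (#|X| <= \rank (PS S) + \rank Q)%N.
  rewrite -{1}(mxrank1 F #|X|) e1; apply: leq_trans (mxrank_adds_leqif _ _).
  by apply: mxrankS; apply: addmx_sub_adds; apply: submx_refl.
have h3 : (#|I| + #|~: I| = #|X|)%N by rewrite cardsC card_ord.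
have h4 : #|I| = #|S|.
  rewrite cardPX; apply: eq_card => x; rewrite inE //.
rewrite -h4 -(leq_add2r #|~: I|) h3; apply: leq_trans h2 _; by rewrite leq_add2l.
Qed.

Lemma Bm_mono e : (Bm e <= Bm e.+1)%MS.
Proof.
apply/row_subP => l; rewrite rowBm; case: ifP => h; last by rewrite sub0mx.
by apply: Rv_sub; apply: ltnW.
Qed.

Lemma trPS (S : {set X}) e : (PS S *m (Bm e)^T)^T = Bm e *m PS S.
Proof. by rewrite trmx_mul trmxK /PS tr_diag_mx. Qed.

Lemma exists_good (S : {set X}) d :
  (#|[set n : M | (deg n < d.+1)%N]| < #|S|)%N ->
  exists v : 'rV[F]_#|X|,
    v *m PS S *m (Bm d.+1)^T = 0 /\ v *m PS S *m (Bm d.+2)^T != 0.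
Proof.
move=> hS.
case: (boolP [exists v : 'rV[F]_#|X|,
    (v *m PS S *m (Bm d.+1)^T == 0) && (v *m PS S *m (Bm d.+2)^T != 0)]).
  by move=> /existsP [v /andP [/eqP h1 h2]]; exists v.
move=> /existsPn H; exfalso.
set A1 := PS S *m (Bm d.+1)^T; set A2 := PS S *m (Bm d.+2)^T.
have sK : (kermx A1 <= kermx A2)%MS.
  apply/row_subP => r; rewrite sub_kermx.
  have := H (row r (kermx A1)); rewrite -!mulmxA -/A1 -/A2 -row_mul mulmx_ker row0 eqxx /=.
  by rewrite negbK.
have r21 : (\rank A2 <= \rank A1)%N.
  have := mxrankS sK; rewrite !mxrank_ker.
  have := rank_leq_row A1; have := rank_leq_row A2; lia.
have s12 : (Bm d.+1 *m PS S <= Bm d.+2 *m PS S)%MS by apply: submxMr; apply: Bm_mono.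
have s21 : (Bm d.+2 *m PS S <= Bm d.+1 *m PS S)%MS.
  rewrite -(mxrank_leqif_sup s12).2 eqn_leq (mxrankS s12) /=.
  by rewrite -!trPS !mxrank_tr.
have hc := closure s21.
have s3 : (Bm K.+1 *m PS S <= Bm d.+1 *m PS S)%MS.
  apply/row_subP => l; rewrite row_mul rowBm; case: ifP => _; first exact: hc.
  by rewrite mul0mx sub0mx.
have s4 : (PS S <= Bm d.+1 *m PS S)%MS.
  apply: submx_trans s3; rewrite -{1}(mul1mx (PS S)); apply: submxMr; exact: full_sub.
have := leq_trans (rank_PS S) (leq_trans (mxrankS s4) (mxrankM_maxl _ _)).
rewrite rank_Bm cardIe => h; have := leq_trans hS h; by rewrite ltnn.
Qed.

Definition psum (n : M) (j : nat) : nat := (\sum_(i < k | (i < j)%N) (n i : nat))%N.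

Lemma psumS n j (hj : (j < k)%N) : psum n j.+1 = (psum n j + n (Ordinal hj))%N.
Proof.
rewrite /psum !(big_mkcond (fun i : 'I_k => (i < _)%N)) /=.
rewrite (bigD1 (Ordinal hj)) //= ltnSn [X in (_ = X + _)%N](bigD1 (Ordinal hj)) //= ltnn add0n addnC.
congr (_ + _)%N; apply: eq_bigr => i hi; rewrite ltnS leq_eqVlt.
by have : (val i != j) by []; move/negbTE ->.
Qed.

Lemma psum_mono n : {homo psum n : x y / (x <= y)%N}.
Proof.
move=> x y hxy; rewrite /psum !(big_mkcond (fun i : 'I_k => (i < _)%N)) /=.
apply: leq_sum => i _; case: ifP => // h; by rewrite (leq_trans h hxy).
Qed.

Lemma psum_le n j : (psum n j <= deg n)%N.
Proof.
rewrite /psum /deg [X in (_ <= X)%N](bigID (fun i : 'I_k => (i < j)%N)) /=; exact: leq_addr.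
Qed.

Lemma count_bound d : (#|[set n : M | (deg n < d.+1)%N]| <= 'C(d + k, k))%N.
Proof.
pose f (n : M) : k.-tuple 'I_d.+1 := [tuple inord (psum n (val j).+1) | j < k].
pose A := [set n : M | (deg n < d.+1)%N].
have inj : {in A &, injective f}.
  move=> n n'; rewrite !inE => hn hn' e.
  have ep : forall j, (j < k)%N -> psum n j.+1 = psum n' j.+1.
    move=> j hj; have := congr1 (fun t => val (tnth t (Ordinal hj))) e.
    rewrite /f !tnth_mktuple /= !inordK //.
      by apply: leq_ltn_trans hn'; apply: psum_le.
    by apply: leq_ltn_trans hn; apply: psum_le.
  have ep' : forall j, (j <= k)%N -> psum n j = psum n' j.
    elim=> [|j IH] hj; first by rewrite /psum !big1.
    exact: ep.
  apply/ffunP => i; apply: val_inj.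
  have := ep' i.+1 (ltn_ord i); rewrite !(psumS _ (ltn_ord i)) ep' ?(ltnW (ltn_ord i)) //.
  have -> : Ordinal (ltn_ord i) = i by apply: val_inj.
  by move/eqP; rewrite eqn_add2l => /eqP.
rewrite -(card_in_imset inj) addnC -card_sorted_tuples.
apply: subset_leq_card; apply/subsetP => t /imsetP [n hn ->]; rewrite inE.
have -> : map val (f n) = map (fun j => psum n j.+1) (iota 0 k).
  rewrite /f /= -map_comp -val_enum_ord -map_comp; apply: eq_map => j /=.
  rewrite inordK //; apply: leq_ltn_trans (psum_le _ _) _; by rewrite inE in hn.
by apply: homo_sorted (iota_sorted 0 k) => x y hxy; apply: psum_mono.
Qed.

Definition o0 : 'I_p := Ordinal (prime_gt0 Hp).
Definition toM (m : 'X_{1..k}) : M := [ffun i => insubd o0 (m i)].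
Definition fromM (n : M) : 'X_{1..k} := [multinom (n i : nat) | i < k].

Lemma eval_sub (P : {mpoly F[k]}) e : reduced P -> (msize P <= e)%N ->
  (\row_(j < #|X|) P.@[enum_val j] <= Bm e)%MS.
Proof.
move=> red hP.
have -> : \row_(j < #|X|) P.@[enum_val j] = \sum_(m <- msupp P) P@_m *: Rv (toM m).
  apply/rowP => j; rewrite mxE summxE mevalE; apply: eq_big_seq => m hm.
  rewrite !mxE /mono; congr (_ * _); apply: eq_bigr => i _.
  by rewrite ffunE val_insubd (red m hm i).
rewrite big_seq; apply: summx_sub => m hm; apply: scalemx_sub; apply: Rv_sub.
apply: leq_trans hP; apply: leq_trans (msize_mdeg_lt hm); rewrite ltnS mdegE /deg.
by apply: eq_leq; apply: eq_bigr => i _; rewrite ffunE val_insubd (red m hm i).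
Qed.

Lemma deg_fromM n : mdeg (fromM n) = deg n.
Proof. by rewrite mdegE /deg; apply: eq_bigr => i _; rewrite mnmE. Qed.

Section Poly.
Variable D : nat.
Variable w : 'rV[F]_#|M|.
Definition Pw : {mpoly F[k]} :=
  \sum_(l < #|M| | (deg (enum_val l) < D.+1)%N) w 0 l *: 'X_[fromM (enum_val l)].

Lemma Pw_eval (a : X) : Pw.@[a] = (w *m Bm D.+1) 0 (enum_rank a).
Proof.
rewrite /Pw raddf_sum !mxE big_mkcond /=; apply: eq_bigr => l _.
rewrite !mxE enum_rankK; case: ifP => _; last by rewrite mulr0.
rewrite mevalZ mevalX /mono; congr (_ * _); apply: eq_bigr => i _; by rewrite mnmE.
Qed.

Lemma Pw_supp m : m \in msupp Pw ->
  exists l : 'I_#|M|, (deg (enum_val l) < D.+1)%N /\ m = fromM (enum_val l).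
Proof.
move/msupp_sum_le => /flatten_mapP [l]; rewrite mem_filter => /andP [hl _].
move/msuppZ_le; rewrite msuppX inE => /eqP ->; by exists l.
Qed.

Lemma Pw_reduced : reduced Pw.
Proof. by move=> m /Pw_supp [l [_ ->]] i; rewrite mnmE ltn_ord. Qed.

Lemma Pw_size : (msize Pw <= D.+1)%N.
Proof.
rewrite msizeE; apply/bigmax_leqP_seq => m /Pw_supp [l [hl ->]] _.
by rewrite deg_fromM.
Qed.
End Poly.

Lemma main_sec d (Hk : (d.+1 <= k)%N) (S : {set X})
  (HS : ('C(d + k + 1, k) + 1 <= #|S|)%N) :
  exists h : X -> F, has_deg h (k * (p - 1) - (d + 1))%N /\ supp h \subset S.
Proof.
have dK : (d.+1 <= K)%N.
  apply: leq_trans Hk _; rewrite /K -{1}[k]muln1 leq_mul2l.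
  by rewrite lt0n pm1_neq0 orbT.
have hS : (#|[set n : M | (deg n < d.+1)%N]| < #|S|)%N.
  apply: leq_ltn_trans (count_bound d) _; rewrite -addn1; apply: leq_trans HS.
  by rewrite leq_add2r; apply: leq_bin2l; rewrite addn1.
have [v [hv1 hv2]] := exists_good hS.
set g := v *m PS S.
have : (g <= Bm (K - d.+1).+1)%MS.
  apply: submx_trans (ker_sub dK); by rewrite sub_kermx hv1.
case/submxP => w gw.
set D := (K - d.+1)%N.
exists (fun a => (Pw D w).@[a]); split.
  exists (Pw D w); split; first by split => //; apply: Pw_reduced.
  have -> : (k * (p - 1) - (d + 1))%N = D by rewrite subn1 addn1.
  apply/eqP; rewrite eqn_leq Pw_size /= ltnNge; apply/negP => hle.
  have hr : \row_(j < #|X|) (Pw D w).@[enum_val j] = g.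
    by apply/rowP => j; rewrite mxE Pw_eval enum_valK -gw.
  have := eval_sub (@Pw_reduced D w) hle; rewrite hr => /submxP [w' gw'].
  move: hv2; rewrite -/g gw' -mulmxA ortho ?mulmx0 ?eqxx //.
  rewrite /D; move: dK; clear; lia.
apply/subsetP => a; rewrite inE Pw_eval -gw /g mul_mx_diag !mxE enum_rankK.
by case: (a \in S) => //; rewrite mulr0 eqxx.
Qed.
End Main.

Local Close Scope ring_scope.

Theorem lemma3p3 (p d : nat) (Hp : prime p) (Hd : (0 < d)%N) (k : nat)
  (Hk : (d.+1 <= k)%N) (S : {set {ffun 'I_k -> 'F_p}})
  (HS : ('C(d + k + 1, k) + 1 <= #|S|)%N) :
  exists h : {ffun 'I_k -> 'F_p} -> 'F_p,
    has_deg h (k * (p - 1) - (d + 1))%N /\ supp h \subset S.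
Proof. exact: main_sec. Qed.
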